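(* Let $x_1,\dots,x_N\in\mathbb{R}^M$, let $w_1,\dots,w_N\ge0$, and fix $\Sigma\in\mathbb{R}^{M\times M}$ symmetric positive definite. Let $f(x\mid\mu,\Sigma)$ be the $\mathcal{N}(\mu,\Sigma)$ density and define $$L(\mu)=-\sum_{k=1}^N w_k\prod_{n=k}^N f(x_n\mid\mu,\Sigma),\qquad v_k(\mu)=\sum_{n=k}^N(x_n-\mu).$$ If $\mu\in\mathbb{R}^M$ satisfies $\Sigma\succeq \frac{v_k(\mu)v_k(\mu)^\top}{N-k+1}$ for all $k=1,\dots,N$, then the Hessian $\nabla^2 L(\mu)$ is positive semidefinite.
   Context: In the application $w_k=\pi(k)\prod_{n=1}^{k-1}g(x_n)$ with $\pi$ a prior on the outage time and $g$ the pre-outage density, so that $L$ is the negative (marginal) likelihood of the post-outage parameters. $A\succeq B$ means $A-B$ is positive semidefinite. *)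

(* Defs.v *)
From HB Require Import structures.
From mathcomp Require Import all_boot all_order all_algebra.
From mathcomp Require Import all_classical all_reals all_analysis.
Set Implicit Arguments. Unset Strict Implicit. Unset Printing Implicit Defensive.
Import Order.TTheory GRing.Theory Num.Theory.
Import numFieldNormedType.Exports.
Local Open Scope ring_scope.

Definition qform (R : realType) (M : nat) (A : 'M[R]_M) (u : 'rV[R]_M) : R :=
  (u *m A *m u^T) 0 0.

Definition psd (R : realType) (M : nat) (A : 'M[R]_M) : Prop :=
  forall u : 'rV[R]_M, 0 <= qform A u.

Definition spd (R : realType) (M : nat) (A : 'M[R]_M) : Prop :=
  A^T = A /\ forall u : 'rV[R]_M, u != 0 -> 0 < qform A u.

Definition gauss_pdf (R : realType) (M : nat) (Sigma : 'M[R]_M)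
  (mu x : 'rV[R]_M) : R :=
  expR (- (1 / 2) * qform (invmx Sigma) (x - mu))
  / Num.sqrt ((2 * pi) ^+ M * \det Sigma).

(* L(mu) = - sum_k w_k prod_{n >= k} f(x_n | mu, Sigma)   (0-indexed) *)
Definition negLik (R : realType) (M N : nat) (x : 'I_N -> 'rV[R]_M)
  (w : 'I_N -> R) (Sigma : 'M[R]_M) (mu : 'rV[R]_M) : R :=
  - \sum_(k < N) w k * \prod_(n < N | (k <= n)%N) gauss_pdf Sigma mu (x n).

(* v_k(mu) = sum_{n >= k} (x_n - mu)   (0-indexed) *)
Definition vtail (R : realType) (M N : nat) (x : 'I_N -> 'rV[R]_M)
  (mu : 'rV[R]_M) (k : 'I_N) : 'rV[R]_M :=
  \sum_(n < N | (k <= n)%N) (x n - mu).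

Definition ebase (R : realType) (M : nat) (i : 'I_M) : 'rV[R]_M := delta_mx 0 i.

Definition hessian (R : realType) (M : nat) (f : 'rV[R]_M -> R)
  (a : 'rV[R]_M) : 'M[R]_M :=
  \matrix_(i < M, j < M)
    'D_(ebase R i) (fun b => 'D_(ebase R j) f b) a.

(* Main.v *)
From HB Require Import structures.
From mathcomp Require Import all_boot all_order all_algebra.
From mathcomp Require Import all_classical all_reals all_analysis.
From mathcomp Require Import ring.
Require Import Defs.
Import Order.TTheory GRing.Theory Num.Theory.
Import numFieldNormedType.Exports.
Local Open Scope ring_scope.
Section Scal.
Variable R : realType.
Lemma term_der (c al be ga d e : R) :
  is_derive (0:R) 1 (fun h : R => c * expR (al + h * be + h ^+ 2 * ga) * (d + h * e))
    (c * expR al * (be * d + e)).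
Proof.
apply: is_derive_eq.
rewrite !(scaler0, scale0r, add0r, addr0, mul0r, mul1r, expr0n, addr0) /=.
rewrite /GRing.scale /=; ring.
Qed.
Lemma sum_der n (c al be ga d e : 'I_n -> R) :
  is_derive (0:R) 1 (fun h : R => \sum_(k < n) c k * expR (al k + h * be k + h ^+ 2 * ga k) * (d k + h * e k))
    (\sum_(k < n) c k * expR (al k) * (be k * d k + e k)).
Proof.
have -> : (fun h : R => \sum_(k < n) c k * expR (al k + h * be k + h ^+ 2 * ga k) * (d k + h * e k))
  = \sum_(k < n) (fun h : R => c k * expR (al k + h * be k + h ^+ 2 * ga k) * (d k + h * e k)).
  by apply/funext => h; rewrite fct_sumE.
apply: is_derive_sum => k; exact: term_der.
Qed.
Lemma D_bridge (V : normedModType R) (f : V -> R) (a v : V) (l : R) :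
  is_derive (0:R) 1 (fun h : R => f (h *: v + a)) l -> 'D_v f a = l.
Proof.
move=> H; rewrite -(@derive_val _ _ _ _ _ _ _ H).
rewrite /derive.
have -> : (fun h0 : R => h0^-1 *: ((f \o shift a) (h0 *: v) - f a)) =
  (fun h0 : R => h0^-1 *: (((fun h : R => f (h *: v + a)) \o shift 0) (h0 *: 1) - (fun h : R => f (h *: v + a)) 0)).
  by apply/funext => h /=; rewrite addr0 scale0r add0r [_%:A]mulr1.
by [].
Qed.
End Scal.

Section Q.
Variables (R : realType) (M : nat).
Lemma qformD (A B : 'M[R]_M) u : qform (A + B) u = qform A u + qform B u.
Proof. by rewrite /qform mulmxDr mulmxDl mxE. Qed.
Lemma qformZ (c : R) (A : 'M[R]_M) u : qform (c *: A) u = c * qform A u.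
Proof. by rewrite /qform -scalemxAr -scalemxAl mxE. Qed.
Lemma qformN (A : 'M[R]_M) u : qform (- A) u = - qform A u.
Proof. by rewrite -scaleN1r qformZ mulN1r. Qed.
Lemma qformB (A B : 'M[R]_M) u : qform (A - B) u = qform A u - qform B u.
Proof. by rewrite qformD qformN. Qed.
Lemma qform_sum n (A : 'I_n -> 'M[R]_M) u :
  qform (\sum_(k < n) A k) u = \sum_(k < n) qform (A k) u.
Proof.
elim/big_ind2: _ => //; last by move=> ? ? ? ? <- <-; rewrite qformD.
by rewrite /qform mulmx0 mul0mx mxE.
Qed.
Lemma qform_outer (B : 'rV[R]_M) u :
  qform (B^T *m B) u = (u *m B^T) 0 0 * (B *m u^T) 0 0.
Proof. by rewrite /qform mulmxA -[u *m B^T *m B *m u^T]mulmxA mxE big_ord1. Qed.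
End Q.

Lemma entry_comb (R : realType) (M : nat) (t c : R) (X Y : 'M[R]_M) i j :
  (t *: (X - c *: Y)) i j = t * (X i j - c * Y i j).
Proof. by rewrite !mxE. Qed.

Lemma outer_entry (R : realType) (M : nat) (B : 'rV[R]_M) i j : (B^T *m B) i j = B 0 i * B 0 j.
Proof. by rewrite mxE big_ord1 !mxE. Qed.

Section Main.
Variables (R : realType) (M N : nat) (x : 'I_N -> 'rV[R]_M) (w : 'I_N -> R) (Sigma : 'M[R]_M).
Hypothesis Ssym : (invmx Sigma)^T = invmx Sigma.
Local Notation S := (invmx Sigma).
Definition bil (y v : 'rV[R]_M) : R := (y *m S *m v^T) 0 0.

Lemma bilC y v : bil v y = bil y v.
Proof.
rewrite /bil; have -> : (y *m S *m v^T) = (v *m S *m y^T)^T.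
  by rewrite !trmx_mul trmxK Ssym mulmxA.
by rewrite [RHS]mxE.
Qed.

Lemma bilDl y z v : bil (y + z) v = bil y v + bil z v.
Proof. by rewrite /bil !mulmxDl mxE. Qed.
Lemma bilNl y v : bil (- y) v = - bil y v.
Proof. by rewrite /bil !mulNmx mxE. Qed.
Lemma bilZl (h : R) y v : bil (h *: y) v = h * bil y v.
Proof. by rewrite /bil -!scalemxAl mxE. Qed.
Lemma bilBl y z v : bil (y - z) v = bil y v - bil z v.
Proof. by rewrite bilDl bilNl. Qed.
Lemma bilDr y z v : bil v (y + z) = bil v y + bil v z.
Proof. by rewrite -!(bilC v) bilDl. Qed.
Lemma bilZr (h : R) y v : bil v (h *: y) = h * bil v y.
Proof. by rewrite -!(bilC v) bilZl. Qed.
Lemma bilBr y z v : bil v (y - z) = bil v y - bil v z.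
Proof. by rewrite -!(bilC v) bilBl. Qed.

Lemma qform_bil y : qform S y = bil y y.
Proof. by []. Qed.

Lemma qform_shift y v (h : R) :
  qform S (y - h *: v) = qform S y + h * (-2 * bil y v) + h ^+ 2 * qform S v.
Proof.
rewrite !qform_bil bilBl !bilBr !bilZl !bilZr (bilC v y).
ring.
Qed.

Lemma bil_sum y (u : 'rV[R]_M) : bil y u = \sum_l (y *m S) 0 l * u 0 l.
Proof. by rewrite /bil [LHS]mxE; apply: eq_bigr => l _; rewrite [u^T _ _]mxE. Qed.

Lemma ebaseE (i l : 'I_M) : ebase R i 0 l = (l == i)%:R.
Proof. by rewrite /ebase mxE eqxx. Qed.

Lemma bil_ebase y i : bil y (ebase R i) = (y *m S) 0 i.
Proof.
rewrite bil_sum (bigD1 i) //= big1 ?addr0; first by rewrite ebaseE eqxx mulr1.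
by move=> l /negbTE nl; rewrite ebaseE nl mulr0.
Qed.

Lemma bil_ebase2 i j : bil (ebase R i) (ebase R j) = S i j.
Proof.
rewrite bil_ebase mxE (bigD1 i) //= big1 ?addr0; first by rewrite ebaseE eqxx mul1r.
by move=> l /negbTE nl; rewrite ebaseE nl mul0r.
Qed.

Local Notation Dk := (Num.sqrt ((2 * pi) ^+ M * \det Sigma)).
Definition Ck (k : 'I_N) : R := \prod_(n < N | (k <= n)%N) Dk^-1.
Definition al (k : 'I_N) b := \sum_(n < N | (k <= n)%N) (- (1/2) * qform S (x n - b)).
Definition be (k : 'I_N) b v := \sum_(n < N | (k <= n)%N) bil (x n - b) v.
Definition ga (k : 'I_N) v := \sum_(n < N | (k <= n)%N) (- (1/2) * qform S v).
Definition sg (k : 'I_N) u v := \sum_(n < N | (k <= n)%N) bil u v.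

Lemma sub_shift (y v b : 'rV[R]_M) (h : R) : y - (h *: v + b) = (y - b) - h *: v.
Proof. by rewrite opprD addrCA addrC. Qed.

Lemma al_shift k b v (h : R) : al k (h *: v + b) = al k b + h * be k b v + h ^+ 2 * ga k v.
Proof.
rewrite /al /be /ga !mulr_sumr -!big_split /=; apply: eq_bigr => n _.
rewrite sub_shift qform_shift; by field.
Qed.

Lemma be_shift k a u v (h : R) : be k (h *: u + a) v = be k a v + h * (- sg k u v).
Proof.
rewrite /be /sg mulrN mulr_sumr -sumrN -big_split /=; apply: eq_bigr => n _.
rewrite sub_shift bilBl bilZl; ring.
Qed.

Lemma Pk_eq (k : 'I_N) b : \prod_(n < N | (k <= n)%N) gauss_pdf Sigma b (x n) = Ck k * expR (al k b).
Proof.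
rewrite /al expR_sum /Ck -big_split /=; apply: eq_bigr => n _.
by rewrite /gauss_pdf mulrC.
Qed.

Lemma D1 b v : 'D_v (negLik x w Sigma) b =
  \sum_(k < N) (- w k * Ck k) * expR (al k b) * (be k b v * 1 + 0).
Proof.
apply: D_bridge.
have -> : (fun h : R => negLik x w Sigma (h *: v + b)) = (fun h : R =>
   \sum_(k < N) (- w k * Ck k) * expR (al k b + h * be k b v + h ^+ 2 * ga k v) * (1 + h * 0)).
  apply/funext => h; rewrite /negLik -sumrN; apply: eq_bigr => k _.
  rewrite Pk_eq al_shift; ring.
exact: sum_der.
Qed.

Lemma D2 a u v :
  'D_u (fun b => \sum_(k < N) (- w k * Ck k) * expR (al k b) * (be k b v * 1 + 0)) a =
  \sum_(k < N) (- w k * Ck k) * expR (al k a) * (be k a u * be k a v + - sg k u v).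
Proof.
apply: D_bridge.
have -> : (fun h : R => \sum_(k < N) (- w k * Ck k) * expR (al k (h *: u + a)) * (be k (h *: u + a) v * 1 + 0)) =
  (fun h : R => \sum_(k < N) (- w k * Ck k) * expR (al k a + h * be k a u + h ^+ 2 * ga k u) * (be k a v + h * (- sg k u v))).
  apply/funext => h; apply: eq_bigr => k _.
  rewrite al_shift be_shift; ring.
exact: sum_der.
Qed.

Lemma hess_entry mu i j : hessian (negLik x w Sigma) mu i j =
  \sum_(k < N) (- w k * Ck k) * expR (al k mu) *
     (be k mu (ebase R i) * be k mu (ebase R j) + - sg k (ebase R i) (ebase R j)).
Proof.
rewrite /hessian mxE.
have -> : (fun b => 'D_(ebase R j) (negLik x w Sigma) b) = (fun b =>
  \sum_(k < N) (- w k * Ck k) * expR (al k b) * (be k b (ebase R j) * 1 + 0)).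
  by apply/funext => b; rewrite D1.
by rewrite D2.
Qed.

Lemma bil_suml (P : pred 'I_N) (y : 'I_N -> 'rV[R]_M) v :
  bil (\sum_(n < N | P n) y n) v = \sum_(n < N | P n) bil (y n) v.
Proof. by rewrite /bil !mulmx_suml summxE. Qed.

Lemma be_vtail k mu v : be k mu v = bil (vtail x mu k) v.
Proof. by rewrite /be /vtail bil_suml. Qed.

Lemma sg_count (k : 'I_N) u v : sg k u v = (N - k)%:R * bil u v.
Proof.
rewrite /sg.
have -> : \sum_(n < N | (k <= n)%N) bil u v = \sum_(k <= n < N) bil u v.
  by rewrite big_geq_mkord.
by rewrite sumr_const_nat mulr_natl.
Qed.

Lemma Ck_ge0 k : 0 <= Ck k.
Proof. by apply: prodr_ge0 => n _; rewrite invr_ge0 sqrtr_ge0. Qed.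

Lemma main_in mu : (forall k, 0 <= w k) -> Sigma \in unitmx ->
  (forall k : 'I_N, psd (Sigma - ((N - k)%:R)^-1 *: ((vtail x mu k)^T *m vtail x mu k))) ->
  psd (hessian (negLik x w Sigma) mu).
Proof.
move=> hw hU hp u.
pose t k := - w k * Ck k * expR (al k mu).
have HH : hessian (negLik x w Sigma) mu = \sum_(k < N) t k *:
    ((vtail x mu k *m S)^T *m (vtail x mu k *m S) - (N - k)%:R *: S).
  apply/matrixP => i j; rewrite hess_entry summxE; apply: eq_bigr => k _.
  rewrite entry_comb outer_entry /t !be_vtail !bil_ebase sg_count bil_ebase2.
  ring.
rewrite /psd HH qform_sum; apply: sumr_ge0 => k _.
set V := vtail x mu k.
have E1 : (u *m (V *m S)^T) 0 0 = bil V u.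
  by rewrite trmx_mul Ssym mulmxA -/(bil u V) bilC.
have E2 : ((V *m S) *m u^T) 0 0 = bil V u by [].
rewrite qformZ qformB qformZ qform_outer E1 E2 qform_bil.
have hk := hp k (u *m S).
rewrite qformB qformZ qform_outer in hk.
have E3 : qform Sigma (u *m S) = bil u u.
  by rewrite /qform -(mulmxA u S Sigma) mulVmx // mulmx1 trmx_mul Ssym mulmxA.
have E4 : ((u *m S) *m V^T) 0 0 = bil V u by rewrite bilC.
have E5 : (V *m (u *m S)^T) 0 0 = bil V u by rewrite trmx_mul Ssym mulmxA.
rewrite E3 E4 E5 in hk.
have mpos : 0 < (N - k)%:R :> R by rewrite ltr0n subn_gt0.
have ht : 0 <= - t k.
  by rewrite /t -!mulNr opprK; apply: mulr_ge0; [apply: mulr_ge0; [exact: hw|exact: Ck_ge0]|exact: expR_ge0].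
have h2 : 0 <= (N - k)%:R * (bil u u - ((N - k)%:R)^-1 * (bil V u * bil V u)).
  by apply: mulr_ge0 => //; exact: ltW.
rewrite mulrBr mulrA mulfV ?mul1r in h2; last by rewrite gt_eqF.
have -> : t k * (bil V u * bil V u - (N - k)%:R * bil u u) =
  (- t k) * ((N - k)%:R * bil u u - bil V u * bil V u) by ring.
exact: mulr_ge0.
Qed.

End Main.

Theorem mainTheorem6 (R : realType) (M N : nat)
  (x : 'I_N -> 'rV[R]_M) (w : 'I_N -> R) (Sigma : 'M[R]_M) (mu : 'rV[R]_M) :
  (forall k, 0 <= w k) ->
  spd Sigma ->
  (forall k : 'I_N,
     psd (Sigma - ((N - k)%:R)^-1 *: ((vtail x mu k)^T *m vtail x mu k))) ->
  psd (hessian (negLik x w Sigma) mu).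
Proof.
move=> hw [hsym hpos] hp.
have Ssym : (invmx Sigma)^T = invmx Sigma by rewrite trmx_inv hsym.
have hU : Sigma \in unitmx.
  rewrite unitmxE unitfE; apply/negP => /det0P [v nv vS].
  by have := hpos v nv; rewrite /qform vS mul0mx mxE ltxx.
exact: main_in.
Qed.
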